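(* Let $X,Y,I\subseteq\mathbb{R}^n$. Then $(X\cup Y)+I=(X+I)\cup(Y+I)$. If moreover $X$ and $Y$ are closed with $X\cup Y$ $\ell_1$-convex, and $I$ is an interval, then also $(X\cap Y)+I=(X+I)\cap(Y+I)$.
   Context: $+$ denotes Minkowski sum. A subset $Z\subseteq\mathbb{R}^n$ is $\ell_1$-convex if for all $z,z'\in Z$, with $D=\sum_i|z_i-z'_i|$, there is $\gamma\colon[0,D]\to Z$ with $\gamma(0)=z,\gamma(D)=z'$ and $\sum_i|\gamma_i(t)-\gamma_i(t')|=|t-t'|$ for all $t,t'$. An interval in $\mathbb{R}^n$ is a set $\prod_{i=1}^n I_i$ with each $I_i\subseteq\mathbb{R}$ a (possibly empty, possibly unbounded) interval. *)

(* Defs.v *)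
From HB Require Import structures.
From mathcomp Require Import all_boot all_order all_algebra.
From mathcomp Require Import all_classical all_reals all_analysis.
Set Implicit Arguments. Unset Strict Implicit. Unset Printing Implicit Defensive.
Import Order.TTheory GRing.Theory Num.Theory.
Import numFieldTopology.Exports numFieldNormedType.Exports.
Local Open Scope classical_set_scope.
Local Open Scope ring_scope.

Definition mink_sum {R : realType} {n : nat} (X Y : set 'rV[R]_n) : set 'rV[R]_n :=
  [set z | exists x, X x /\ exists y, Y y /\ z = x + y].

Definition dist1 {R : realType} {n : nat} (z z' : 'rV[R]_n) : R :=
  \sum_(i < n) `|z ord0 i - z' ord0 i|.

(* l1-convexity as in the paper: any two points joined by an l1-geodesic
   gamma : [0,D] -> Z, D = dist1 z z' (gamma is given on R, only its
   restriction to [0,D] matters). *)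
Definition l1_convex {R : realType} {n : nat} (Z : set 'rV[R]_n) : Prop :=
  forall z z', Z z -> Z z' ->
    exists gamma : R -> 'rV[R]_n,
      gamma 0 = z /\ gamma (dist1 z z') = z' /\
      (forall t, 0 <= t <= dist1 z z' -> Z (gamma t)) /\
      (forall t t', 0 <= t <= dist1 z z' -> 0 <= t' <= dist1 z z' ->
         dist1 (gamma t) (gamma t') = `|t - t'|).

Definition interval_Rn {R : realType} {n : nat} (I : set 'rV[R]_n) : Prop :=
  exists Ii : 'I_n -> set R,
    (forall i, is_interval (Ii i)) /\ I = [set x | forall i, Ii i (x ord0 i)].

(* Main.v *)
Require Import Defs.
From HB Require Import structures.
From mathcomp Require Import all_boot all_order all_algebra.
From mathcomp Require Import all_classical all_reals all_analysis.
From mathcomp Require Import lra ring.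
Import Order.TTheory GRing.Theory Num.Theory.
Import numFieldTopology.Exports numFieldNormedType.Exports.
Local Open Scope classical_set_scope.
Local Open Scope ring_scope.
Set Implicit Arguments. Unset Strict Implicit.

Lemma closed_approx (R : realType) n (Z : set 'rV[R]_n) p :
  closed Z -> (forall e : R, 0 < e -> exists q, Z q /\ ball p e q) -> Z p.
Proof.
move=> cZ H; apply: cZ => B /nbhs_ballP [e e0 sub].
have [q [Zq bq]] := H e e0; exists q; split => //; exact: sub.
Qed.

Lemma coord_le (R : realType) n (u v : 'rV[R]_n) i :
  `|u ord0 i - v ord0 i| <= dist1 u v.
Proof.
rewrite /dist1 (bigD1 i) //= lerDl sumr_ge0 //.
Qed.
Lemma dist1_ge0 (R : realType) n (u v : 'rV[R]_n) : 0 <= dist1 u v.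
Proof. by rewrite /dist1 sumr_ge0. Qed.

Lemma dist1_ball (R : realType) n (u v : 'rV[R]_n) e :
  dist1 u v < e -> ball u e v.
Proof.
move=> h; have e0 : 0 < e by exact: le_lt_trans (dist1_ge0 u v) h.
split => //.
move=> i j; rewrite (ord1 i) /ball /=.
exact: le_lt_trans (coord_le u v j) h.
Qed.

Lemma between_abs (R : realType) (a b c : R) :
  `|a - c| + `|c - b| = `|a - b| -> a <= b -> a <= c <= b.
Proof.
move=> h ab.
case: (lerP 0 (a - c)) => h1; try rewrite (ger0_norm h1) in h; try rewrite (ltr0_norm h1) in h;
case: (lerP 0 (c - b)) => h2; try rewrite (ger0_norm h2) in h; try rewrite (ltr0_norm h2) in h;
case: (lerP 0 (a - b)) => h3; try rewrite (ger0_norm h3) in h; try rewrite (ltr0_norm h3) in h;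
apply/andP; split; lra.
Qed.

Lemma interval_between (R : realType) (E : set R) a b c :
  is_interval E -> E a -> E b -> `|a - c| + `|c - b| = `|a - b| -> E c.
Proof.
move=> iE Ea Eb h; case: (leP a b) => ab.
  exact: (iE a b) (between_abs h ab).
apply: (iE b a) => //; apply: between_abs (ltW ab).
by rewrite (distrC b c) (distrC c a) (distrC b a) addrC.
Qed.

Lemma dist1_between (R : realType) n (x g y : 'rV[R]_n) :
  dist1 x g + dist1 g y = dist1 x y -> forall i,
  `|x ord0 i - g ord0 i| + `|g ord0 i - y ord0 i| = `|x ord0 i - y ord0 i|.
Proof.
move=> h i.
have H := @psumr_eq0P _ _ predT
  (fun i => `|x ord0 i - g ord0 i| + `|g ord0 i - y ord0 i| - `|x ord0 i - y ord0 i|).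
apply/eqP; rewrite -subr_eq0; apply/eqP; apply: (H _ _ i isT).
  move=> j _; rewrite subr_ge0.
  by rewrite -[x ord0 j - y ord0 j](subrKA (g ord0 j)) ler_normD.
by rewrite sumrB big_split /= -/(dist1 x g) -/(dist1 g y) -/(dist1 x y) h subrr.
Qed.

Lemma crossing (R : realType) n (X Y : set 'rV[R]_n) (gam : R -> 'rV[R]_n) (D : R) :
  closed X -> closed Y -> 0 <= D -> X (gam 0) -> Y (gam D) ->
  (forall t, 0 <= t <= D -> X (gam t) \/ Y (gam t)) ->
  (forall t t', 0 <= t <= D -> 0 <= t' <= D -> dist1 (gam t) (gam t') <= `|t - t'|) ->
  exists t, 0 <= t <= D /\ X (gam t) /\ Y (gam t).
Proof.
move=> cX cY D0 X0 YD cov Lip.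
pose S := [set t | 0 <= t <= D /\ Y (gam t)].
have SD : S D by split => //; apply/andP; split.
have lbS : has_lbound S by exists 0 => t [/andP[]].
have neS : S !=set0 by exists D.
have hinf : has_inf S by [].
pose s := inf S.
have s_le : forall t, S t -> s <= t := fun t St => ge_inf lbS St.
have s0 : 0 <= s by apply: lb_le_inf => // t [/andP[]].
have sD : s <= D := s_le D SD.
have sI : 0 <= s <= D by apply/andP; split.
have Ys : Y (gam s).
  apply: closed_approx => // e e0.
  have [t St ts] := inf_adherent e0 hinf.
  have st := s_le t St.
  exists (gam t); split; first by case: St.
  apply: dist1_ball; apply: le_lt_trans (Lip s t sI _) _; first by case: St.
  rewrite distrC ger0_norm; [rewrite -/s in ts; lra | rewrite subr_ge0 //].
exists s; split => //; split => //.
have [s00|spos] : s = 0 \/ 0 < s.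
  by move: s0; rewrite le_eqVlt => /orP[/eqP ->|->]; [left|right].
  by rewrite s00.
apply: closed_approx => // e e0.
case: (ltP (e/2) s) => h.
  have tI : 0 <= s - e/2 <= D by apply/andP; split; lra.
  exists (gam (s - e/2)); split.
    case: (cov _ tI) => // Yt.
    have := s_le _ (conj tI Yt); lra.
  apply: dist1_ball; apply: le_lt_trans (Lip s _ sI tI) _.
  rewrite ger0_norm; lra.
have tI : (0:R) <= 0 <= D by rewrite lexx D0.
exists (gam 0); split => //.
apply: dist1_ball; apply: le_lt_trans (Lip s _ sI tI) _.
rewrite subr0 ger0_norm; lra.
Qed.

Theorem proposition2p4 (R : realType) (n : nat) (X Y I : set 'rV[R]_n) :
  mink_sum (X `|` Y) I = mink_sum X I `|` mink_sum Y I /\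
  (closed X -> closed Y -> l1_convex (X `|` Y) -> interval_Rn I ->
   mink_sum (X `&` Y) I = mink_sum X I `&` mink_sum Y I).
Proof.
split.
  apply/seteqP; split => z.
    move=> [x [[Xx|Yx] [a [Ia ->]]]]; [left|right]; exists x; split => //; exists a; split => //.
  move=> [[x [Xx [a [Ia ->]]]]|[x [Xx [a [Ia ->]]]]]; exists x; (split; [by [left|right]|]);
    exists a; split => //.
move=> cX cY l1 [Ii [iI ->]].
apply/seteqP; split => z.
  move=> [x [[Xx Yx] [a [Ia ->]]]]; split; exists x; split => //; exists a; split => //.
move=> [[x [Xx [a [Ia za]]]] [y [Yy [b [Ib zb]]]]].
have [gam [g0 [gD [gZ gd]]]] := l1 x y (or_introl Xx) (or_intror Yy).
have D0 := dist1_ge0 x y.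
have I0 : (0:R) <= 0 <= dist1 x y by rewrite lexx D0.
have ID : (0:R) <= dist1 x y <= dist1 x y by rewrite lexx D0.
have [t [tI [Xt Yt]]] : exists t, 0 <= t <= dist1 x y /\ X (gam t) /\ Y (gam t).
  apply: crossing cX cY D0 _ _ gZ _; first by rewrite g0.
    by rewrite gD.
  by move=> t t' ht ht'; rewrite gd.
exists (gam t); split => //; exists (z - gam t); split; last by rewrite addrC subrK.
have [t0 tD] := andP tI.
have bet : dist1 x (gam t) + dist1 (gam t) y = dist1 x y.
  have h1 : dist1 x (gam t) = t.
    by rewrite -[X in dist1 X _]g0 gd // sub0r normrN ger0_norm.
  have h2 : dist1 (gam t) y = dist1 x y - t.
    rewrite -[X in dist1 _ X]gD gd // distrC ger0_norm //.
    by rewrite subr_ge0.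
  by rewrite h1 h2 addrC subrK.
move=> i /=; rewrite !mxE.
have ea : a = z - x by rewrite za addrAC subrr add0r.
have eb : b = z - y by rewrite zb addrAC subrr add0r.
have Ha : Ii i (z ord0 i - x ord0 i) by have := Ia i; rewrite ea !mxE.
have Hb : Ii i (z ord0 i - y ord0 i) by have := Ib i; rewrite eb !mxE.
apply: (interval_between (iI i) Ha Hb).
have := dist1_between bet i.
have E : forall u v : R, (z ord0 i - u) - (z ord0 i - v) = - (u - v) by move=> u v; ring.
by rewrite !E !normrN.
Qed.
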